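(* Let $\eta_1,\dots,\eta_n$ be admissible measures on $\mathbb R$; for each $i$ let $X_i$ have law $\cosh(x)\,\eta_i(dx)$ (a probability measure), and $U_i:=\tanh(X_i)$. Define $m_i:=\eta_i(\mathbb R)$, $\varepsilon_i:=1-m_i$, $\alpha:=\sum_{i=1}^n\varepsilon_i$, and $\nu:=\sum_{i=1}^n\mathbb E U_i^2$. Then $0\le m_i\le1$ for all $i$ and $\alpha\le\nu\le2\alpha$.
   Context: A finitely supported positive measure $\eta$ on $\mathbb R$ is called admissible if $\int e^x\,\eta(dx)=\int e^{-x}\,\eta(dx)=1$. *)

(* Defs.v *)
From HB Require Import structures.
From mathcomp Require Import all_boot all_order all_algebra.
From mathcomp Require Import all_classical all_reals.
From mathcomp Require Import sequences exp.
Set Implicit Arguments. Unset Strict Implicit. Unset Printing Implicit Defensive.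
Import Order.TTheory GRing.Theory Num.Theory.
Local Open Scope ring_scope.

(* A finitely supported positive measure on R is represented by a finite list
   of atoms (x, w) : the measure is  \sum_(p <- eta) p.2 * delta_{p.1},
   with all weights p.2 >= 0. *)
Definition fsmeasure (R : realType) := seq (R * R).

Definition fs_pos (R : realType) (eta : fsmeasure R) : Prop :=
  forall p, p \in eta -> 0 <= p.2.

Definition fs_int (R : realType) (eta : fsmeasure R) (f : R -> R) : R :=
  \sum_(p <- eta) p.2 * f p.1.

Definition fs_mass (R : realType) (eta : fsmeasure R) : R :=
  fs_int eta (fun _ => 1).

Definition admissible (R : realType) (eta : fsmeasure R) : Prop :=
  fs_pos eta /\ fs_int eta (@expR R) = 1 /\ fs_int eta (fun x => expR (- x)) = 1.

Definition coshR (R : realType) (x : R) : R := (expR x + expR (- x)) / 2.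
Definition sinhR (R : realType) (x : R) : R := (expR x - expR (- x)) / 2.
Definition tanhR (R : realType) (x : R) : R := sinhR x / coshR x.

(* expectation of g(X) where X has law cosh(x) eta(dx) *)
Definition law_expect (R : realType) (eta : fsmeasure R) (g : R -> R) : R :=
  fs_int eta (fun x => g x * coshR x).

(* Main.v *)
Require Import Defs.
From HB Require Import structures.
From mathcomp Require Import all_boot all_order all_algebra.
From mathcomp Require Import all_classical all_reals.
From mathcomp Require Import sequences exp.
From mathcomp Require Import ring lra.
Import Order.TTheory GRing.Theory Num.Theory.
Local Open Scope ring_scope.

Lemma pt (R : realType) (x : R) :
  1 <= coshR x /\ coshR x - 1 <= tanhR x ^+ 2 * coshR x <= 2 * (coshR x - 1).
Proof.
rewrite /tanhR /coshR /sinhR expRN.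
have e0 : 0 < expR x := expR_gt0 x.
set e := expR x.
have ei : e * e^-1 = 1 by rewrite mulfV ?gt_eqF.
have ie0 : 0 < e^-1 by rewrite invr_gt0.
have h : 0 <= (e - 1) ^+ 2 * e^-1 by rewrite mulr_ge0 ?sqr_ge0 ?ltW.
have c1 : 1 <= (e + e^-1) / 2 by nra.
have cp : 0 < (e + e^-1) / 2 by lra.
set c := (e + e^-1)/2 in c1 cp *.
have cc : 1 = c * c^-1 by rewrite mulfV ?gt_eqF.
have ic0 : 0 < c^-1 by rewrite invr_gt0.
have -> : ((e - e^-1) / 2 / c) ^+ 2 * c = c - c^-1.
  rewrite /c. field. rewrite gt_eqF // gt_eqF //=; nra.
split => //. apply/andP; split; nra.
Qed.

Lemma per (R : realType) (eta : fsmeasure R) : admissible eta ->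
  0 <= fs_mass eta <= 1 /\
  1 - fs_mass eta <= law_expect eta (fun x => tanhR x ^+ 2) <= 2 * (1 - fs_mass eta).
Proof.
move=> [pos [h1 h2]].
have hc : fs_int eta (@coshR R) = 1.
  have -> : fs_int eta (@coshR R) = (fs_int eta (@expR R) + fs_int eta (fun x => expR (- x))) / 2.
    rewrite /fs_int mulrDl !mulr_suml -big_split /=; apply: eq_bigr => p _.
    rewrite /coshR; ring.
  rewrite h1 h2; lra.
have m0 : 0 <= fs_mass eta.
  by rewrite /fs_mass /fs_int big_seq sumr_ge0 // => p /pos; rewrite mulr1.
have m1 : fs_mass eta <= 1.
  rewrite -hc /fs_mass /fs_int big_seq [X in _ <= X]big_seq; apply: ler_sum => p /pos w0.
  by rewrite mulr1 ler_peMr //; case: (@pt R p.1).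
rewrite m0 m1; split => //.
rewrite -{1 3}hc /fs_mass /law_expect /fs_int -sumrB mulr_sumr.
apply/andP; split; rewrite big_seq [X in _ <= X]big_seq; apply: ler_sum => p /pos w0;
  case: (@pt R p.1) => _ /andP[a b]; nra.
Qed.

Theorem lemma2 (R : realType) (n : nat) (eta : 'I_n -> fsmeasure R)
  (adm : forall i, admissible (eta i)) :
  let m := fun i => fs_mass (eta i) in
  let eps := fun i => 1 - m i in
  let alpha := \sum_(i < n) eps i in
  let nu := \sum_(i < n) law_expect (eta i) (fun x => tanhR x ^+ 2) in
  (forall i, 0 <= m i <= 1) /\ alpha <= nu <= 2 * alpha.
Proof.
move=> m eps alpha nu; split.
  by move=> i; case: (@per R _ (adm i)).
rewrite /alpha /nu mulr_sumr; apply/andP; split; apply: ler_sum => i _;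
  by case: (@per R _ (adm i)) => _ /andP[].
Qed.
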